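(* Consider the model in the context with $\bar e=0$. For $\mathcal U\subseteq\mathcal U_0$ and $\mathcal C\subseteq\mathcal C_0$ define $f(\mathcal U,\mathcal C)$ as follows: if $|\mathcal C|\ge K$, $f(\mathcal U,\mathcal C)=\max_R E(\mathcal U,\mathcal C,R)$, the maximum over all recommendations $R$ such that $(\mathcal U,\mathcal C)$ is a stable set with recommendation $R$ (undefined if no such $R$ exists); if $|\mathcal C|<K$, $f(\mathcal U,\mathcal C)$ is defined in the same way but in the modified instance where each user receives exactly $|\mathcal C|$ recommendations instead of $K$. Then for every $\mathcal U\subseteq\mathcal U_0$, all $c_0,c_1\in\mathcal C_0$ and every $\mathcal C\subseteq\mathcal C_0\setminus\{c_0,c_1\}$, $$f(\mathcal U,\mathcal C\cup\{c_0,c_1\})-f(\mathcal U,\mathcal C\cup\{c_1\})\le f(\mathcal U,\mathcal C\cup\{c_0\})-f(\mathcal U,\mathcal C),$$ whenever all four terms are well-defined. This holds for every value of $K$.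
   Context: An instance consists of a dimension $D\ge 1$, users $\mathcal U_0=\{1,\dots,U\}$ with types $u_i\in\mathbb R^D_{\ge0}$, creators $\mathcal C_0=\{1,\dots,C\}$ with types $c_j\in\mathbb R^D_{\ge 0}$, all types of Euclidean norm $1$, a positive integer $K$, a creator threshold $\bar a\in\mathbb N_0$ and a user threshold $\bar e\in[0,1]$. For $\mathcal U\subseteq\mathcal U_0$, $\mathcal C\subseteq\mathcal C_0$, a recommendation $R$ assigns to each $i\in\mathcal U$ a set $R(i)\subseteq\mathcal C$; its total engagement is $E(\mathcal U,\mathcal C,R)=\sum_{i\in\mathcal U}\sum_{j\in R(i)}u_i^Tc_j$. The pair $(\mathcal U,\mathcal C)$ is a stable set with recommendation $R$ if $|R(i)|=K$ and $u_i^Tc_j\ge\bar e$ for all $i\in\mathcal U$, $j\in R(i)$, and $|\{i\in\mathcal U: j\in R(i)\}|\ge\bar a$ for every $j\in\mathcal C$. *)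

(* Defs.v *)
From HB Require Import structures.
From mathcomp Require Import all_boot all_order all_algebra.
From mathcomp Require Import reals.
Set Implicit Arguments. Unset Strict Implicit. Unset Printing Implicit Defensive.
Import Order.TTheory GRing.Theory Num.Theory.
Local Open Scope ring_scope.

Section Model.
Variables (R : realType) (D nU nC : nat).

Definition dot (x y : 'I_D -> R) : R := \sum_(d < D) x d * y d.

Definition sqnorm (x : 'I_D -> R) : R := dot x x.

Definition engagement (u : 'I_nU -> 'I_D -> R) (c : 'I_nC -> 'I_D -> R)
    (US : {set 'I_nU}) (Rc : 'I_nU -> {set 'I_nC}) : R :=
  \sum_(i in US) \sum_(j in Rc i) dot (u i) (c j).

Definition stable_with (k : nat) (ebar : R) (abar : nat)
    (u : 'I_nU -> 'I_D -> R) (c : 'I_nC -> 'I_D -> R)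
    (US : {set 'I_nU}) (CS : {set 'I_nC}) (Rc : 'I_nU -> {set 'I_nC}) : Prop :=
  (forall i, i \in US ->
      [/\ Rc i \subset CS, #|Rc i| = k &
          forall j, j \in Rc i -> ebar <= dot (u i) (c j)]) /\
  (forall j, j \in CS -> (abar <= #|[set i in US | j \in Rc i]|)%N).

(* f_value K ebar abar u c US CS v  :<->  f(US,CS) is well-defined and equals v:
   v is the maximum of E(US,CS,Rc) over all Rc making (US,CS) stable, where each
   user receives min(K, |CS|) recommendations. *)
Definition f_value (K : nat) (ebar : R) (abar : nat)
    (u : 'I_nU -> 'I_D -> R) (c : 'I_nC -> 'I_D -> R)
    (US : {set 'I_nU}) (CS : {set 'I_nC}) (v : R) : Prop :=
  (exists Rc, stable_with (minn K #|CS|) ebar abar u c US CS Rc /\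
              engagement u c US Rc = v) /\
  (forall Rc, stable_with (minn K #|CS|) ebar abar u c US CS Rc ->
              engagement u c US Rc <= v).

End Model.

(* Main.v *)
Require Import Defs.
From mathcomp Require Import all_boot all_order all_algebra.
From HB Require Import structures.
From mathcomp Require Import reals.
From mathcomp Require Import zify lra.
Set Implicit Arguments. Unset Strict Implicit. Unset Printing Implicit Defensive.
Import Order.TTheory GRing.Theory Num.Theory.
From mathcomp Require Import zify.
Set Implicit Arguments. Unset Strict Implicit. Unset Printing Implicit Defensive.

Lemma sum_in_card (V : finType) (Z S : {set V}) :
  \sum_(z in Z) (z \in S) = #|S :&: Z|.
Proof.
rewrite -sum1_card [RHS](eq_bigl (fun z => (z \in Z) && (z \in S))); last first.
  by move=> z; rewrite in_setI andbC.
rewrite big_mkcondr /=; apply: eq_bigr => z _; by case: (z \in S).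
Qed.

Definition deg (T V : finType) (US : {set T}) (F : T -> {set V}) (j : V) : nat :=
  \sum_(i in US) (j \in F i).

Lemma deg_card (T V : finType) (US : {set T}) (F : T -> {set V}) (j : V) :
  deg US F j = #|[set i in US | j \in F i]|.
Proof.
rewrite /deg -sum1_card [RHS](eq_bigl (fun i => (i \in US) && (j \in F i))); last first.
  by move=> i; rewrite inE.
rewrite big_mkcondr /=; apply: eq_bigr => i _; by case: (j \in F i).
Qed.

Definition phi (T V : finType) (US : {set T}) (CS : {set V}) (abar : nat)
  (X Y : T -> {set V}) : nat :=
  \sum_(j in CS) ((abar - deg US X j) + (abar - deg US Y j)).

Lemma phiC (T V : finType) (US : {set T}) (CS : {set V}) abar X Y :
  phi US CS abar X Y = phi US CS abar Y X.
Proof. by apply: eq_bigr => j _; rewrite addnC. Qed.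

Definition swp (T V : finType) (i0 : T) (x t : V) (X : T -> {set V}) : T -> {set V} :=
  fun i => if i == i0 then x |: (X i :\ t) else X i.

Definition rl (T V : finType) (US : {set T}) (CS : {set V}) (X Y : T -> {set V}) : rel V :=
  fun z t => [exists i in US, [&& z \in Y i, z \notin X i, t \in X i, t \notin Y i & t \in CS]].


Lemma swp_in (T V : finType) (i0 : T) (x t : V) (X : T -> {set V}) i j :
  j != t -> j \in X i -> j \in swp i0 x t X i.
Proof.
move=> jt jX; rewrite /swp; case: (i == i0) => //.
by rewrite in_setU1 in_setD1 jt jX orbT.
Qed.

Lemma swp_out (T V : finType) (i0 : T) (x t : V) (X : T -> {set V}) i j :
  j != x -> j \notin X i -> j \notin swp i0 x t X i.
Proof.
move=> jx jX; rewrite /swp; case: (i == i0) => //.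
by rewrite in_setU1 in_setD1 negb_or jx /= negb_and (negbTE jX) orbT.
Qed.

Lemma swp_nc (T V : finType) (i0 : T) (x t : V) (X : T -> {set V}) i j :
  j != x -> j != t -> (j \in swp i0 x t X i) = (j \in X i).
Proof.
move=> jx jt; rewrite /swp; case: (i == i0) => //.
by rewrite in_setU1 in_setD1 (negbTE jx) jt.
Qed.

Lemma swp_mult (T V : finType) (i0 : T) (x t : V) (X Y : T -> {set V}) :
  x \in Y i0 -> x \notin X i0 -> t \in X i0 -> t \notin Y i0 ->
  forall i j, (j \in swp i0 x t X i) + (j \in swp i0 t x Y i) = (j \in X i) + (j \in Y i).
Proof.
move=> h1 h2 h3 h4 i j; rewrite /swp; case: (i == i0) /eqP => [->|] //.
have xt : x != t by apply/eqP => e; rewrite e h3 in h2.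
rewrite !in_setU1 !in_setD1.
case: (eqVneq j x) => [->|jx]; first by rewrite (negbTE xt) h1 (negbTE h2).
case: (eqVneq j t) => [->|jt]; first by rewrite h3 (negbTE h4).
by [].
Qed.

Lemma swp_card (T V : finType) (i0 : T) (x t : V) (X : T -> {set V}) :
  x \notin X i0 -> t \in X i0 -> forall i, #|swp i0 x t X i| = #|X i|.
Proof.
move=> h2 h3 i; rewrite /swp; case: (i == i0) /eqP => [->|] //.
by rewrite cardsU1 in_setD1 (negbTE h2) andbF (cardsD1 t (X i0)) h3.
Qed.

Lemma swp_deg (T V : finType) (US : {set T}) (i0 : T) (x t : V) (X : T -> {set V}) :
  i0 \in US -> x \notin X i0 -> t \in X i0 ->
  forall j, deg US (swp i0 x t X) j + (j == t) = deg US X j + (j == x).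
Proof.
move=> iU h2 h3 j; rewrite /deg (bigD1 i0 iU) [in RHS](bigD1 i0 iU) /=.
rewrite (eq_bigr (fun i => nat_of_bool (j \in X i))); last first.
  by move=> i /andP[_ /negbTE ne]; rewrite /swp ne.
rewrite /swp eqxx in_setU1 in_setD1.
have xt : x != t by apply/eqP => e; rewrite e h3 in h2.
case: (eqVneq j x) => [->|jx]; first by rewrite (negbTE h2) (negbTE xt) /=; lia.
case: (eqVneq j t) => [->|jt] /=; first by rewrite h3; lia.
lia.
Qed.

Lemma path_tr (T V : finType) (US : {set T}) (CS : {set V}) (X Y : T -> {set V}) i0 x t q a :
  path (rl US CS X Y) a q -> x \notin a :: q -> t \notin q ->
  path (rl US CS (swp i0 x t X) (swp i0 t x Y)) a q.
Proof.
elim: q a => [//|b q IH] a /= /andP[hab hp].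
rewrite !in_cons !negb_or => /and3P[xa xb xq] /andP[tb tq].
apply/andP; split; last by apply: IH => //; rewrite in_cons negb_or xb.
case/existsP: hab => i /andP[iU /and5P[h1 h2 h3 h4 h5]].
apply/existsP; exists i; rewrite iU /=; apply/and5P; split => //.
- by apply: swp_in => //; rewrite eq_sym.
- by apply: swp_out => //; rewrite eq_sym.
- by apply: swp_in => //; rewrite eq_sym.
- by apply: swp_out => //; rewrite eq_sym.
Qed.

Lemma aug (T V : finType) (US : {set T}) (CS : {set V}) (p : seq V) :
  forall x (X Y : T -> {set V}), x \in CS -> path (rl US CS X Y) x p -> uniq (x :: p) ->
  exists X' Y' : T -> {set V},
   [/\ (forall i j, (j \in X' i) + (j \in Y' i) = (j \in X i) + (j \in Y i)),
       (forall i, #|X' i| = #|X i| /\ #|Y' i| = #|Y i|),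
       (forall i j, j \notin CS -> (j \in X' i) = (j \in X i) /\ (j \in Y' i) = (j \in Y i)) &
       (forall j, deg US X' j + (j == last x p) = deg US X j + (j == x))].
Proof.
elim: p => [|t p IH] x X Y xC /=.
  by move=> _ _; exists X, Y; split.
move=> /andP[hxt hp] /andP[xnot hu].
case/existsP: hxt => i0 /andP[i0U /and5P[h1 h2 h3 h4 h5]].
have hp1 : path (rl US CS (swp i0 x t X) (swp i0 t x Y)) t p.
  apply: path_tr => //; by case/andP: hu.
have [X' [Y' [m c n d]]] := IH t _ _ h5 hp1 hu.
exists X', Y'; split.
- by move=> i j; rewrite m swp_mult.
- by move=> i; rewrite (c i).1 (c i).2 swp_card // swp_card.
- move=> i j jn; have jx : j != x by apply/eqP => e; rewrite e xC in jn.
  have jt : j != t by apply/eqP => e; rewrite e h5 in jn.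
  by rewrite (n i j jn).1 (n i j jn).2 !swp_nc.
- by move=> j; rewrite d swp_deg.
Qed.

Lemma improve (T V : finType) (US : {set T}) (CS : {set V}) (abar K : nat)
  (A B X Y : T -> {set V}) (j0 : V) :
  (forall i, i \in US -> #|A i| = K) ->
  (forall i, i \in US -> #|X i| = K) ->
  (forall i, i \in US -> B i \subset CS) ->
  (forall i, i \in US -> forall j, (j \in X i) + (j \in Y i) = (j \in A i) + (j \in B i)) ->
  (forall j, j \in CS -> abar <= deg US A j) ->
  (forall j, j \in CS -> abar <= deg US B j) ->
  j0 \in CS -> deg US X j0 < abar ->
  exists X' Y' : T -> {set V},
   [/\ (forall i j, (j \in X' i) + (j \in Y' i) = (j \in X i) + (j \in Y i)),
       (forall i, #|X' i| = #|X i| /\ #|Y' i| = #|Y i|),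
       (forall i j, j \notin CS -> (j \in X' i) = (j \in X i) /\ (j \in Y' i) = (j \in Y i)) &
       phi US CS abar X' Y' < phi US CS abar X Y].
Proof.
move=> hA hX hB hm hdA hdB j0C hj0.
set Z := [set z in CS | connect (rl US CS X Y) j0 z].
have j0Z : j0 \in Z by rewrite inE j0C connect0.
have degXY : forall j, deg US X j + deg US Y j = deg US A j + deg US B j.
  by move=> j; rewrite /deg -!big_split; apply: eq_bigr => i iU; apply: hm.
case: (boolP [exists z in Z, abar < deg US X z]).
  case/existsP => z /andP[zZ hz]; move: zZ hz; rewrite inE => /andP[zC /connectP[p hp ->]] hz.
  case/shortenP: hp hz => p' hp' hu _ hz.
  have [X' [Y' [m c n d]]] := aug j0C hp' hu.
  exists X', Y'; split => //.
  set zz := last j0 p' in hz d.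
  have sXY : forall j, deg US X' j + deg US Y' j = deg US X j + deg US Y j.
    by move=> j; rewrite /deg -!big_split; apply: eq_bigr => i iU; apply: m.
  have zj0 : zz != j0 by apply/eqP => e; rewrite e in hz; lia.
  rewrite /phi (bigD1 j0 j0C) [X in _ < X](bigD1 j0 j0C) /= -addSn.
  apply: leq_add.
    have := d j0; have := sXY j0; have := degXY j0; have := hdA j0 j0C; have := hdB j0 j0C.
    rewrite eqxx eq_sym (negbTE zj0) /=; lia.
  apply: leq_sum => j /andP[jC jn].
  have := d j; have := sXY j; rewrite (negbTE jn).
  case: (eqVneq j zz) => [->|jz] /=; lia.
move/existsPn => hall.
have h1 : \sum_(z in Z) deg US A z <= \sum_(z in Z) deg US X z.
  rewrite /deg exchange_big [X in _ <= X]exchange_big /=.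
  apply: leq_sum => i iU; rewrite !sum_in_card.
  case: (boolP [exists z in Z, (z \in Y i) && (z \notin X i)]).
    case/existsP => z0 /andP[z0Z /andP[z0Y z0X]].
    have clos : forall t, t \in X i -> t \notin Y i -> t \in CS -> t \in Z.
      move=> t tX tY tC; rewrite inE tC /=.
      move: z0Z; rewrite inE => /andP[_ cz].
      apply: (connect_trans cz); apply: connect1; apply/existsP; exists i.
      by rewrite iU /= z0Y z0X tX tY tC.
    have sub : X i :\: Z \subset A i :\: Z.
      apply/subsetP => j; rewrite !in_setD => /andP[jZ jX]; rewrite jZ /=.
      have := hm i iU j; rewrite jX.
      case: (boolP (j \in Y i)) => jY.
        by case: (j \in A i); case: (j \in B i).
      case: (boolP (j \in CS)) => jC.
        by move: jZ; rewrite (clos j jX jY jC).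
      have jB : j \notin B i by apply: contra jC; apply: (subsetP (hB i iU)).
      by rewrite (negbTE jB); case: (j \in A i).
    have := cardsID Z (X i); have := cardsID Z (A i); have := subset_leq_card sub.
    rewrite hX // hA //; lia.
  move/existsPn => hn; apply: subset_leq_card; apply/subsetP => j.
  rewrite !in_setI => /andP[jA jZ]; rewrite jZ andbT.
  have := hn j; rewrite jZ /= negb_and negbK.
  have := hm i iU j; rewrite jA.
  by case: (j \in X i); case: (j \in Y i).
have h2 : \sum_(z in Z) abar <= \sum_(z in Z) deg US A z.
  apply: leq_sum => z; rewrite inE => /andP[zC _]; exact: hdA.
have h3 : \sum_(z in Z) deg US X z < \sum_(z in Z) abar.
  rewrite (bigD1 j0 j0Z) [X in _ < X](bigD1 j0 j0Z) /= -addSn.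
  apply: leq_add => //; apply: leq_sum => z /andP[zZ _].
  have := hall z; rewrite negb_and -leqNgt => /orP[/negP nz|//]; by exfalso; apply: nz; exact: zZ.
by have := leq_trans h3 (leq_trans h2 h1); rewrite ltnn.
Qed.

Definition valid (T V : finType) (US : {set T}) (CS : {set V}) (c0 c1 : V) (K : nat)
  (A B P Q : T -> {set V}) : Prop :=
  forall i, i \in US -> [/\ P i \subset c0 |: CS, Q i \subset c1 |: CS, #|P i| = K, #|Q i| = K &
     forall j, (j \in P i) + (j \in Q i) = (j \in A i) + (j \in B i)].

Lemma valid_tr (T V : finType) (US : {set T}) (CS : {set V}) (c0 c1 : V) (K : nat)
  (A B P Q P' Q' : T -> {set V}) :
  valid US CS c0 c1 K A B P Q ->
  (forall i j, (j \in P' i) + (j \in Q' i) = (j \in P i) + (j \in Q i)) ->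
  (forall i, #|P' i| = #|P i| /\ #|Q' i| = #|Q i|) ->
  (forall i j, j \notin CS -> (j \in P' i) = (j \in P i) /\ (j \in Q' i) = (j \in Q i)) ->
  valid US CS c0 c1 K A B P' Q'.
Proof.
move=> hv m c n i iU; have [s1 s2 k1 k2 hm] := hv i iU; split.
- apply/subsetP => j jP; case: (boolP (j \in CS)) => jC; first by rewrite in_setU1 jC orbT.
  by apply: (subsetP s1); rewrite -(n i j jC).1.
- apply/subsetP => j jP; case: (boolP (j \in CS)) => jC; first by rewrite in_setU1 jC orbT.
  by apply: (subsetP s2); rewrite -(n i j jC).2.
- by rewrite (c i).1.
- by rewrite (c i).2.
- by move=> j; rewrite m.
Qed.

Lemma iterate (T V : finType) (US : {set T}) (CS : {set V}) (c0 c1 : V) (abar K : nat)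
  (A B : T -> {set V}) :
  (forall i, i \in US -> #|A i| = K) ->
  (forall i, i \in US -> B i \subset CS) ->
  (forall j, j \in CS -> abar <= deg US A j) ->
  (forall j, j \in CS -> abar <= deg US B j) ->
  forall n (P Q : T -> {set V}), valid US CS c0 c1 K A B P Q -> phi US CS abar P Q <= n ->
  exists P' Q' : T -> {set V}, valid US CS c0 c1 K A B P' Q' /\ phi US CS abar P' Q' = 0.
Proof.
move=> hA hB hdA hdB n; elim: n => [|n IH] P Q hv hphi.
  by exists P, Q; split => //; apply/eqP; rewrite -leqn0.
case: (eqVneq (phi US CS abar P Q) 0) => [h0|hne]; first by exists P, Q.
case: (boolP [exists j in CS, (deg US P j < abar) || (deg US Q j < abar)]); last first.
  move/existsPn => h; move: hne; rewrite /phi big1 ?eqxx // => j jC.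
  have := h j; rewrite jC /= negb_or -!leqNgt => /andP[h1 h2].
  by apply/eqP; rewrite addn_eq0 !subn_eq0 h1 h2.
case/existsP => j0 /andP[j0C /orP[hj0|hj0]].
  have [P' [Q' [m c nc lt]]] := improve hA (fun i iU => let: And5 _ _ k _ _ := hv i iU in k)
     hB (fun i iU => let: And5 _ _ _ _ hm := hv i iU in hm) hdA hdB j0C hj0.
  apply: (IH P' Q'); first exact: valid_tr hv m c nc.
  by rewrite -ltnS; apply: leq_trans lt hphi.
have [Q' [P' [m c nc lt]]] := improve hA (fun i iU => let: And5 _ _ _ k _ := hv i iU in k)
     hB (fun i iU => let: And5 _ _ _ _ hm := hv i iU in fun j => etrans (addnC _ _) (hm j))
     hdA hdB j0C hj0.
apply: (IH P' Q').
  apply: (valid_tr hv).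
  - by move=> i j; rewrite addnC m addnC.
  - by move=> i; have [c1' c2'] := c i.
  - by move=> i j jC; have [n1 n2] := nc i j jC.
rewrite phiC -ltnS; apply: leq_trans lt _; by rewrite phiC.
Qed.

Lemma sum_mult (V : finType) (R : numDomainType) (w : V -> R) (S1 S2 S3 S4 : {set V}) :
  (forall j, (j \in S1) + (j \in S2) = (j \in S3) + (j \in S4))%N ->
  (\sum_(j in S1) w j + \sum_(j in S2) w j = \sum_(j in S3) w j + \sum_(j in S4) w j)%R.
Proof.
move=> h; rewrite !(big_mkcond (fun j => j \in _)) -!big_split /=.
apply: eq_bigr => j _; move: (h j).
by case: (j \in S1); case: (j \in S2); case: (j \in S3); case: (j \in S4) => //= _;
  rewrite ?addr0 ?add0r.
Qed.

Lemma sum_sub (V : finType) (R : numDomainType) (w : V -> R) (S1 S2 : {set V}) :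
  S1 \subset S2 -> (forall j, 0 <= w j)%R ->
  (\sum_(j in S1) w j <= \sum_(j in S2) w j)%R.
Proof.
move=> hs hw; rewrite !(big_mkcond (fun j => j \in _)) /=.
apply: ler_sum => j _; case: (boolP (j \in S1)) => j1.
  by rewrite (subsetP hs j j1).
by case: (j \in S2).
Qed.

Unset Implicit Arguments.
Local Open Scope ring_scope.

Theorem proposition2 (R : realType) (D nU nC : nat)
    (u : 'I_nU -> 'I_D -> R) (c : 'I_nC -> 'I_D -> R) (K abar : nat) :
  (1 <= D)%N -> (0 < K)%N ->
  (forall i d, 0 <= u i d) -> (forall j d, 0 <= c j d) ->
  (forall i, sqnorm (u i) = 1) -> (forall j, sqnorm (c j) = 1) ->
  forall (US : {set 'I_nU}) (c0 c1 : 'I_nC) (CS : {set 'I_nC}),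
  c0 != c1 -> c0 \notin CS -> c1 \notin CS ->
  forall v01 v1 v0 v : R,
  f_value K 0 abar u c US (c0 |: (c1 |: CS)) v01 ->
  f_value K 0 abar u c US (c1 |: CS) v1 ->
  f_value K 0 abar u c US (c0 |: CS) v0 ->
  f_value K 0 abar u c US CS v ->
  v01 - v1 <= v0 - v.
Proof.
move=> _ _ hu hc _ _ US c0 c1 CS c01 c0n c1n v01 v1 v0 v
  [[R01 [s01 e01]] _] [_ m1] [_ m0] [[RC [sC eC]] _].
have dge0 : forall i j, 0 <= dot (u i) (c j).
  by move=> i j; apply: sumr_ge0 => d _; apply: mulr_ge0.
suff [P [Q [sP [sQ hE]]]] : exists P Q,
   stable_with (minn K #|c0 |: CS|) 0 abar u c US (c0 |: CS) P /\
   stable_with (minn K #|c1 |: CS|) 0 abar u c US (c1 |: CS) Q /\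
   engagement u c US R01 + engagement u c US RC <= engagement u c US P + engagement u c US Q.
  have := m0 P sP; have := m1 Q sQ; rewrite -e01 -eC; lra.
have c0n' : c0 \notin c1 |: CS by rewrite in_setU1 negb_or c01.
have cd0 : #|c0 |: CS| = (#|CS|.+1)%N by rewrite cardsU1 c0n.
have cd1 : #|c1 |: CS| = (#|CS|.+1)%N by rewrite cardsU1 c1n.
have cd01 : #|c0 |: (c1 |: CS)| = (#|CS|.+2)%N by rewrite cardsU1 c0n' cd1.
rewrite cd0 cd1; rewrite cd01 in s01.
case: s01 => s01u s01c; case: sC => sCu sCc.
case: (leqP K #|CS|) => hKm.
  have mk2 : minn K #|CS|.+2 = K by apply/minn_idPl; apply: (leq_trans hKm); apply: leqW; apply: leqnSn.
  have mk1 : minn K #|CS|.+1 = K by apply/minn_idPl; apply: (leq_trans hKm); apply: leqnSn.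
  have mk : minn K #|CS| = K by apply/minn_idPl.
  rewrite mk1.
  have hA : forall i, i \in US -> #|R01 i| = K.
    by move=> i iU; case: (s01u i iU); rewrite mk2.
  have hB : forall i, i \in US -> RC i \subset CS.
    by move=> i iU; case: (sCu i iU).
  have hdA : forall j, j \in CS -> (abar <= deg US R01 j)%N.
    by move=> j jC; rewrite deg_card; apply: s01c; rewrite !in_setU1 jC !orbT.
  have hdB : forall j, j \in CS -> (abar <= deg US RC j)%N.
    by move=> j jC; rewrite deg_card; apply: sCc.
  have c1n' : c1 \notin c0 |: CS by rewrite in_setU1 negb_or eq_sym c01.
  pose P0 := fun i => if c1 \in R01 i then
     (if [pick t in RC i :\: R01 i] is Some t then t |: (R01 i :\ c1) else R01 i) else R01 i.
  pose Q0 := fun i => if c1 \in R01 i then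
     (if [pick t in RC i :\: R01 i] is Some t then c1 |: (RC i :\ t) else RC i) else RC i.
  have v0' : valid US CS c0 c1 K R01 RC P0 Q0.
    move=> i iU; have [sub cA _] := s01u i iU; have [subB cB _] := sCu i iU.
    rewrite mk2 in cA; rewrite mk in cB.
    rewrite /P0 /Q0.
    have c1B : c1 \notin RC i by apply/negP => h; move: (subsetP subB c1 h); rewrite (negbTE c1n).
    case: (boolP (c1 \in R01 i)) => c1A; last first.
      split => //.
      - apply/subsetP => j jA; move: (subsetP sub j jA); rewrite !in_setU1.
        case: (eqVneq j c1) => [e|jn]; first by rewrite -e jA in c1A.
        by [].
      - by apply/subsetP => j jB; rewrite in_setU1 (subsetP subB j jB) orbT.
    case: pickP => [t|none]; last first.
      exfalso.
      have BA : RC i \subset R01 i.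
        apply/subsetP => j jB; apply/negPn/negP => jnA.
        by have := none j; rewrite in_setD jnA jB.
      have e : RC i = R01 i by apply/eqP; rewrite eqEcard BA cA cB leqnn.
      by move: c1B; rewrite e c1A.
    rewrite in_setD => /andP[tnA tB].
    have tC := subsetP subB t tB.
    have tc1 : t != c1 by apply/eqP => e; move: c1n; rewrite -e tC.
    split.
    - apply/subsetP => j; rewrite in_setU1 in_setD1 => /orP[/eqP->|/andP[jn jA]].
        by rewrite in_setU1 tC orbT.
      by move: (subsetP sub j jA); rewrite !in_setU1 (negbTE jn).
    - apply/subsetP => j; rewrite !in_setU1 in_setD1 => /orP[->//|/andP[_ jB]].
      by rewrite (subsetP subB j jB) orbT.
    - by rewrite cardsU1 in_setD1 (negbTE tnA) andbF -cA (cardsD1 c1 (R01 i)) c1A.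
    - by rewrite cardsU1 in_setD1 (negbTE c1B) andbF -cB (cardsD1 t (RC i)) tB.
    - move=> j; rewrite !in_setU1 !in_setD1.
      case: (eqVneq j t) => [->|jt]; first by rewrite (negbTE tc1) (negbTE tnA) tB.
      case: (eqVneq j c1) => [->|jc]; first by rewrite (negbTE c1B) c1A.
      by [].
  have [P [Q [hv hphi]]] := iterate hA hB hdA hdB v0' (leqnn _).
  have hd : forall j, j \in CS -> (abar <= deg US P j)%N /\ (abar <= deg US Q j)%N.
    move=> j jC; move/eqP: hphi; rewrite sum_nat_eq0 => /forall_inP /(_ j jC).
    by rewrite addn_eq0 !subn_eq0 => /andP[].
  exists P, Q; split; last split.
  - split.
      move=> i iU; have [s1 _ k1 _ _] := hv i iU.
      split; [exact: s1 | exact: k1 | by move=> j _; apply: dge0].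
    move=> j; rewrite in_setU1 => /orP[/eqP->|jC]; last by rewrite -deg_card; case: (hd j jC).
    rewrite -deg_card.
    have -> : deg US P c0 = deg US R01 c0.
      apply: eq_bigr => i iU; have [_ s2 _ _ hm] := hv i iU.
      have c0Q : c0 \notin Q i by apply/negP => h; move: (subsetP s2 c0 h); rewrite (negbTE c0n').
      have c0B : c0 \notin RC i by apply/negP => h; move: (subsetP (hB i iU) c0 h); rewrite (negbTE c0n).
      by have := hm c0; rewrite (negbTE c0Q) (negbTE c0B) !addn0.
    by rewrite deg_card; apply: s01c; rewrite setU11.
  - split.
      move=> i iU; have [_ s2 _ k2 _] := hv i iU.
      split; [exact: s2 | exact: k2 | by move=> j _; apply: dge0].
    move=> j; rewrite in_setU1 => /orP[/eqP->|jC]; last by rewrite -deg_card; case: (hd j jC).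
    rewrite -deg_card.
    have -> : deg US Q c1 = deg US R01 c1.
      apply: eq_bigr => i iU; have [s1 _ _ _ hm] := hv i iU.
      have c1P : c1 \notin P i by apply/negP => h; move: (subsetP s1 c1 h); rewrite (negbTE c1n').
      have c1B : c1 \notin RC i by apply/negP => h; move: (subsetP (hB i iU) c1 h); rewrite (negbTE c1n).
      by have := hm c1; rewrite (negbTE c1P) (negbTE c1B) !add0n addn0.
    by rewrite deg_card; apply: s01c; rewrite !in_setU1 eqxx orbT.
  rewrite /engagement -!big_split /=; apply: ler_sum => i iU.
  have [_ _ _ _ hm] := hv i iU.
  by rewrite (@sum_mult _ _ (fun j => dot (u i) (c j)) _ _ _ _ hm).
have mk1 : minn K #|CS|.+1 = #|CS|.+1 by apply/minn_idPr.
have mk : minn K #|CS| = #|CS| by apply/minn_idPr; apply: ltnW.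
rewrite mk1.
have hUS : (abar <= #|US|)%N.
  apply: leq_trans (s01c c0 (setU11 _ _)) _; apply: subset_leq_card.
  by apply/subsetP => i; rewrite inE => /andP[].
have stab : forall c2, c2 \notin CS ->
    stable_with #|CS|.+1 0 abar u c US (c2 |: CS) (fun _ => c2 |: CS).
  move=> c2 c2n; split.
    move=> i iU; split; [exact: subxx | by rewrite cardsU1 c2n | by move=> j _; apply: dge0].
  move=> j jC; apply: leq_trans hUS _; apply: subset_leq_card.
  by apply/subsetP => i iU; rewrite inE iU jC.
exists (fun _ => c0 |: CS), (fun _ => c1 |: CS); split; first exact: stab.
split; first exact: stab.
rewrite /engagement -!big_split /=; apply: ler_sum => i iU.
have [sub _ _] := s01u i iU; have [subC cardC _] := sCu i iU.
rewrite mk in cardC.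
have eC' : RC i = CS by apply/eqP; rewrite eqEcard subC cardC leqnn.
rewrite eC' !big_setU1 //=.
have := @sum_sub _ _ (fun j => dot (u i) (c j)) _ _ sub (dge0 i).
rewrite !big_setU1 //=; lra.
Qed.
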